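(* Let $\Gamma$ be a finite collection of supports $\gamma\subseteq\{1,\dots,n\}$, and let $\mathcal N_\Gamma=\circ_{\gamma\in\Gamma}\mathcal N_\gamma$ be a total Pauli channel that is a composition of local Pauli channels $\mathcal N_\gamma$ with supports $\gamma\in\Gamma$, all satisfying Assumption (A). Let a stabilizer (subsystem) code with measured stabilizer subgroup $\mathcal M$ be given. Then, using the syndrome data (i.e. the syndrome expectation values $\Lambda(M)$, $M\in\mathcal M$): 1. The total channel $\mathcal N_\Gamma$ is learnable if and only if every error $e\in\overline{\mathcal E}_\Gamma$ has a syndrome that is nontrivial and distinct from the syndromes of all other errors in $\overline{\mathcal E}_\Gamma$. 2. A given individual channel $\mathcal N_\gamma$ is learnable if and only if every $e\in\mathcal E_\gamma$ produces a syndrome that is nontrivial and unique among the syndromes of all errors in $\mathcal E_\Gamma$. 3. For every nontrivial syndrome class $C\in\mathcal C^*$, the syndrome class error rate $P_C=\sum_{e\in C}p_e$ can be learned up to an $\mathcal O(\|\vec p^{(\Gamma_C)}\|^2)$ deviation, i.e. there is a quantity uniquely determined by the syndrome expectation values that differs from $P_C$ by $\mathcal O(\|\vec p^{(\Gamma_C)}\|^2)$.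
   Context: $\mathcal P_n=\{I,X,Y,Z\}^{\otimes n}$ denotes the $n$-qubit Pauli operators without phases. For $A,B\in\mathcal P_n$, $[[A,B]]=1$ if $A,B$ commute and $-1$ otherwise; $\langle A,B\rangle=0$ if they commute and $1$ otherwise. A Pauli channel acts as $\rho\mapsto\sum_{e\in\mathcal P_n}P(e)e\rho e^\dagger$. For each $\gamma\in\Gamma$, the local channel $\mathcal N_\gamma$ has error distribution $P_\gamma$ on $\mathcal P_n$ with $P_\gamma(e)=0$ unless $\mathrm{supp}(e)\subseteq\gamma$; the total channel is the composition, whose error distribution $P$ is the convolution of the $P_\gamma$ over the Pauli group. Assumption (A): for every $\gamma\in\Gamma$, $P_\gamma(I)>1/2$, and $P_\gamma(e)>0$ for every non-identity $e$ with $\mathrm{supp}(e)\subseteq\gamma$. Let $\mathcal E_\gamma$ be the set of non-identity Paulis supported in $\gamma$; $\mathcal E_\Gamma$ is the disjoint union of the $\mathcal E_\gamma$ (each element $e$ remembers its channel $\gamma_e$, so the same operator from different channels gives distinct elements), and $\overline{\mathcal E}_\Gamma=\bigcup_\gamma\mathcal E_\gamma$ as a set of operators. Local error rates: $p_e=P_{\gamma_e}(e)$ for $e\in\mathcal E_\Gamma$. The code has stabilizer group $\mathcal S$ (the center of the gauge group, an abelian subgroup of $\mathcal P_n$); a codeword is stabilized by $\mathcal S$. Only a subgroup $\mathcal M\le\mathcal S$ generated by measured generators $M_1,\dots,M_m$ is measured. The experiment (prepare a codeword, apply $\mathcal N_\Gamma$, perfectly measure the generators) is repeated; the syndrome statistics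 are equivalently given by the syndrome expectation values $\Lambda(M)=\sum_e P(e)[[e,M]]$ for $M\in\mathcal M$. A quantity is learnable if it is uniquely determined by $(\Lambda(M))_{M\in\mathcal M}$ among all channels of this form (with the given $\Gamma$) satisfying Assumption (A). The syndrome of $e$ is $(\langle e,M\rangle)_{M\in\mathcal M}$ (equivalently its commutation with $M_1,\dots,M_m$); an error is detectable if its syndrome is nontrivial. Syndrome classes are the equivalence classes of $\mathcal E_\Gamma$ under equality of syndromes; $C_0$ is the class of trivial syndrome and $\mathcal C^*$ the set of nontrivial classes. For $C\in\mathcal C^*$, $\Gamma_C=\{\gamma\in\Gamma:\mathcal E_\gamma\cap C\ne\emptyset\}$ and $\vec p^{(\Gamma_C)}$ is the vector of error rates $p_e$ for $e\in\bigcup_{\gamma\in\Gamma_C}\mathcal E_\gamma$. *)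

(* Defs.v *)
From HB Require Import structures.
From mathcomp Require Import all_boot all_order all_algebra.
From mathcomp Require Import reals.
Set Implicit Arguments. Unset Strict Implicit. Unset Printing Implicit Defensive.
Import Order.TTheory GRing.Theory Num.Theory.
Local Open Scope ring_scope.

Inductive pauli1 := PI | PX | PY | PZ.

Definition pauli1_enc (a : pauli1) : bool * bool :=
  match a with PI => (false, false) | PX => (true, false)
             | PY => (true, true) | PZ => (false, true) end.
Definition pauli1_dec (b : bool * bool) : pauli1 :=
  match b with (false, false) => PI | (true, false) => PX
             | (true, true) => PY | (false, true) => PZ end.
Lemma pauli1_encK : cancel pauli1_enc pauli1_dec. Proof. by case. Qed.
HB.instance Definition _ := Equality.copy pauli1 (can_type pauli1_encK).
HB.instance Definition _ := Choice.copy pauli1 (can_type pauli1_encK).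
HB.instance Definition _ := Countable.copy pauli1 (can_type pauli1_encK).
HB.instance Definition _ := Finite.copy pauli1 (can_type pauli1_encK).

(** product of single-qubit Paulis, phases dropped *)
Definition mul1 (a b : pauli1) : pauli1 :=
  match a, b with
  | PI, x | x, PI => x
  | PX, PX | PY, PY | PZ, PZ => PI
  | PX, PY | PY, PX => PZ
  | PY, PZ | PZ, PY => PX
  | PZ, PX | PX, PZ => PY
  end.

Definition anti1 (a b : pauli1) : bool := [&& a != PI, b != PI & a != b].

Definition pauli (n : nat) := {ffun 'I_n -> pauli1}.

Definition pid (n : nat) : pauli n := [ffun => PI].
Definition pmul (n : nat) (a b : pauli n) : pauli n := [ffun i => mul1 (a i) (b i)].
Definition supp (n : nat) (e : pauli n) : {set 'I_n} := [set i | e i != PI].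

Definition anticomm (n : nat) (a b : pauli n) : bool :=
  odd #|[set i | anti1 (a i) (b i)]|.
Definition commsign {R : nzRingType} (n : nat) (a b : pauli n) : R :=
  if anticomm a b then -1 else 1.

Definition pdist (R : nzRingType) (n : nat) := {ffun pauli n -> R}.

Definition conv (R : nzRingType) (n : nat) (p q : pdist R n) : pdist R n :=
  [ffun e => \sum_(a : pauli n) p a * q (pmul a e)].
Definition dirac_id (R : nzRingType) (n : nat) : pdist R n :=
  [ffun e => if e == pid n then 1 else 0].

(** A local Pauli channel with support gamma satisfying Assumption (A) *)
Definition valid_local (R : realType) (n : nat) (gamma : {set 'I_n})
    (p : pdist R n) : Prop :=
  [/\ (forall e, 0 <= p e),
      \sum_e p e = 1,
      (forall e, ~~ (supp e \subset gamma) -> p e = 0),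
      p (pid n) > 1 / 2 &
      (forall e, e != pid n -> supp e \subset gamma -> 0 < p e)].

Definition valid_family (R : realType) (n : nat) (Gamma : {set {set 'I_n}})
    (P : {set 'I_n} -> pdist R n) : Prop :=
  forall gamma, gamma \in Gamma -> valid_local gamma (P gamma).

Definition total_dist (R : nzRingType) (n : nat) (Gamma : {set {set 'I_n}})
    (P : {set 'I_n} -> pdist R n) : pdist R n :=
  \big[@conv R n/dirac_id R n]_(gamma in Gamma) P gamma.

(** the element M_S = prod_{i in S} M_i of the measured group; every element
    of M is of this form *)
Definition mgen (n m : nat) (gens : 'I_m -> pauli n) (S : {set 'I_m}) : pauli n :=
  \big[@pmul n/pid n]_(i in S) gens i.

Definition Lambda (R : nzRingType) (n : nat) (P : pdist R n) (M : pauli n) : R :=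
  \sum_e P e * commsign e M.

Definition syndrome_data (R : nzRingType) (n m : nat) (gens : 'I_m -> pauli n)
    (Gamma : {set {set 'I_n}}) (P : {set 'I_n} -> pdist R n)
    : {ffun {set 'I_m} -> R} :=
  [ffun S => Lambda (total_dist Gamma P) (mgen gens S)].

Definition learnable (R : realType) (T : Type) (n m : nat) (gens : 'I_m -> pauli n)
    (Gamma : {set {set 'I_n}}) (Q : ({set 'I_n} -> pdist R n) -> T) : Prop :=
  forall P P', valid_family Gamma P -> valid_family Gamma P' ->
    syndrome_data gens Gamma P = syndrome_data gens Gamma P' -> Q P = Q P'.

Definition syndrome (n m : nat) (gens : 'I_m -> pauli n) (e : pauli n)
    : {ffun 'I_m -> bool} := [ffun i => anticomm e (gens i)].
Definition trivial_syndrome (m : nat) : {ffun 'I_m -> bool} := [ffun => false].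

Definition in_Egamma (n : nat) (gamma : {set 'I_n}) (e : pauli n) : bool :=
  (e != pid n) && (supp e \subset gamma).
Definition in_Ebar (n : nat) (Gamma : {set {set 'I_n}}) (e : pauli n) : bool :=
  [exists gamma in Gamma, in_Egamma gamma e].

(** Syndrome class C_s of E_Gamma with syndrome s: the pairs (gamma, e) with
    gamma in Gamma, e in E_gamma, syndrome e = s. *)
Definition GammaC (n m : nat) (gens : 'I_m -> pauli n) (Gamma : {set {set 'I_n}})
    (s : {ffun 'I_m -> bool}) : {set {set 'I_n}} :=
  [set gamma in Gamma | [exists e, in_Egamma gamma e && (syndrome gens e == s)]].

Definition classRate (R : nzRingType) (n m : nat) (gens : 'I_m -> pauli n)
    (Gamma : {set {set 'I_n}}) (P : {set 'I_n} -> pdist R n)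
    (s : {ffun 'I_m -> bool}) : R :=
  \sum_(gamma in Gamma) \sum_(e | in_Egamma gamma e && (syndrome gens e == s)) P gamma e.

Definition normsqC (R : nzRingType) (n m : nat) (gens : 'I_m -> pauli n)
    (Gamma : {set {set 'I_n}}) (P : {set 'I_n} -> pdist R n)
    (s : {ffun 'I_m -> bool}) : R :=
  \sum_(gamma in GammaC gens Gamma s) \sum_(e | in_Egamma gamma e) (P gamma e) ^+ 2.

(* Main.v *)
Require Import Defs.
From HB Require Import structures.
From mathcomp Require Import all_boot all_order all_algebra.
From mathcomp Require Import reals.
From mathcomp Require Import exp.
From mathcomp Require Import ring lra.
Import Order.TTheory GRing.Theory Num.Theory.
Local Open Scope ring_scope.
Set Implicit Arguments. Unset Strict Implicit. Unset Printing Implicit Defensive.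
Lemma mul1A : associative mul1. Proof. by do 3 case. Qed.
Lemma mul1C : commutative mul1. Proof. by do 2 case. Qed.
Lemma mul1I a : mul1 PI a = a. Proof. by case: a. Qed.
Lemma mul1Ir a : mul1 a PI = a. Proof. by case: a. Qed.
Lemma mul1K a b : mul1 a (mul1 a b) = b. Proof. by case: a; case: b. Qed.
Lemma mul1_eqI a b : (mul1 a b == PI) = (a == b). Proof. by case: a; case: b. Qed.
Lemma anti1C a b : anti1 a b = anti1 b a. Proof. by case: a; case: b. Qed.
Lemma anti1_mul a b c : anti1 (mul1 a b) c = anti1 a c (+) anti1 b c.
Proof. by case: a; case: b; case: c. Qed.
Lemma anti1I c : anti1 PI c = false. Proof. by case: c. Qed.
Lemma anti1_ex a : a != PI -> anti1 a (if a == PX then PZ else PX).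
Proof. by case: a. Qed.

Section Pauli.
Variable n : nat.
Implicit Types a b c e M : pauli n.

Lemma pmulE a b i : pmul a b i = mul1 (a i) (b i). Proof. by rewrite ffunE. Qed.
Lemma pidE i : pid n i = PI. Proof. by rewrite ffunE. Qed.
Lemma pmulA : associative (@pmul n).
Proof. by move=> a b c; apply/ffunP=> i; rewrite !pmulE mul1A. Qed.
Lemma pmulC : commutative (@pmul n).
Proof. by move=> a b; apply/ffunP=> i; rewrite !pmulE mul1C. Qed.
Lemma pmul1 a : pmul (pid n) a = a.
Proof. by apply/ffunP=> i; rewrite !pmulE pidE mul1I. Qed.
Lemma pmulr1 a : pmul a (pid n) = a.
Proof. by rewrite pmulC pmul1. Qed.
Lemma pmulK a b : pmul a (pmul a b) = b.
Proof. by apply/ffunP=> i; rewrite !pmulE mul1K. Qed.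
Lemma pmulKr a b : pmul (pmul b a) a = b.
Proof. by rewrite pmulC (pmulC b) pmulK. Qed.
Lemma pmulvv a : pmul a a = pid n.
Proof. by apply/ffunP=> i; rewrite !pmulE pidE; case: (a i). Qed.
Lemma pmul_eq1 a b : (pmul a b == pid n) = (a == b).
Proof.
apply/eqP/eqP => [h|->]; last exact: pmulvv.
by rewrite -(pmulK a b) h pmulr1.
Qed.
Lemma pmul_inj a : injective (@pmul n a).
Proof. exact: (can_inj (pmulK a)). Qed.
Lemma pmulr_inj a : injective (fun x => @pmul n x a).
Proof. exact: (@can_inj _ _ _ (fun x => pmul x a) (fun x => pmulKr a x)). Qed.

Lemma odd_card_xor (p q : pred 'I_n) :
  odd #|[set i | p i (+) q i]| = odd #|[set i | p i]| (+) odd #|[set i | q i]|.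
Proof.
set A := [set i | p i]; set B := [set i | q i].
have -> : [set i | p i (+) q i] = (A :|: B) :\: (A :&: B).
  by apply/setP=> i; rewrite !inE; case: (p i); case: (q i).
have h1 := cardsUI A B.
have h2 : (#|(A :|: B) :\: (A :&: B)| + #|A :&: B| = #|A :|: B|)%N.
  rewrite cardsD. have -> : (A :|: B) :&: (A :&: B) = A :&: B.
    by apply/setIidPr; apply: subset_trans (subsetIl _ _) (subsetUl _ _).
  by rewrite subnK // subset_leq_card // (subset_trans (subsetIl _ _) (subsetUl _ _)).
have h3 : (#|(A :|: B) :\: (A :&: B)| + (#|A :&: B|).*2 = #|A| + #|B|)%N.
  by rewrite -addnn addnA h2 h1.
by rewrite -oddD -h3 oddD odd_double addbF.
Qed.

Lemma anticommC a b : anticomm a b = anticomm b a.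
Proof.
rewrite /anticomm; have -> // : [set i | anti1 (a i) (b i)] = [set i | anti1 (b i) (a i)].
by apply/setP=> i; rewrite !inE anti1C.
Qed.

Lemma anticomm_mull a b c : anticomm (pmul a b) c = anticomm a c (+) anticomm b c.
Proof.
rewrite /anticomm -odd_card_xor.
have -> // : [set i | anti1 (pmul a b i) (c i)] = [set i | anti1 (a i) (c i) (+) anti1 (b i) (c i)].
by apply/setP=> i; rewrite !inE pmulE anti1_mul.
Qed.
Lemma anticomm_mulr a b c : anticomm c (pmul a b) = anticomm c a (+) anticomm c b.
Proof. by rewrite !(anticommC c) anticomm_mull. Qed.
Lemma anticomm1 c : anticomm (pid n) c = false.
Proof.
rewrite /anticomm. have -> : [set i | anti1 (pid n i) (c i)] = set0.
  by apply/setP=> i; rewrite !inE pidE anti1I.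
by rewrite cards0.
Qed.
Lemma anticommr1 c : anticomm c (pid n) = false.
Proof. by rewrite anticommC anticomm1. Qed.

Definition site (i : 'I_n) (b : pauli1) : pauli n := [ffun j => if j == i then b else PI].

Lemma anticomm_site a i (b : pauli1) : anti1 (a i) b -> anticomm a (site i b).
Proof.
move=> h; rewrite /anticomm.
have -> : [set j | anti1 (a j) (site i b j)] = [set i].
  apply/setP=> j; rewrite !inE ffunE; case: eqP => [->|_]; first by rewrite h.
  by rewrite anti1C anti1I.
by rewrite cards1.
Qed.

Lemma exists_anti a : a != pid n -> exists M, anticomm a M.
Proof.
move=> ha; have [i hi] : exists i, a i != PI.
  apply/existsP; apply: contraR ha => /existsPn h; apply/eqP/ffunP=> i.
  by rewrite pidE; apply/eqP; move: (h i); rewrite negbK.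
by exists (site i (if a i == PX then PZ else PX)); apply: anticomm_site; apply: anti1_ex.
Qed.

Lemma supp_pid : supp (pid n) = set0.
Proof. by apply/setP=> i; rewrite !inE pidE eqxx. Qed.

Lemma supp_mul (g : {set 'I_n}) a b :
  supp a \subset g -> supp b \subset g -> supp (pmul a b) \subset g.
Proof.
move=> /subsetP ha /subsetP hb; apply/subsetP=> i; rewrite !inE pmulE.
case: (boolP (a i == PI)) => [/eqP ->|hai]; first by rewrite mul1I => h; apply: hb; rewrite inE.
by move=> _; apply: ha; rewrite inE.
Qed.

Section Chi.
Variable R : nzRingType.
Definition chi a M : R := commsign a M.
Lemma chiC a M : chi a M = chi M a.
Proof. by rewrite /chi /commsign anticommC. Qed.
Lemma chi_mull a b M : chi (pmul a b) M = chi a M * chi b M.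
Proof.
rewrite /chi /commsign anticomm_mull.
by case: (anticomm a M); case: (anticomm b M); rewrite /= ?mulr1 ?mul1r ?mulrNN ?mulr1.
Qed.
Lemma chi_mulr a b M : chi M (pmul a b) = chi M a * chi M b.
Proof. by rewrite !(chiC M) chi_mull. Qed.
Lemma chi1 M : chi (pid n) M = 1.
Proof. by rewrite /chi /commsign anticomm1. Qed.
Lemma chir1 M : chi M (pid n) = 1.
Proof. by rewrite chiC chi1. Qed.
Lemma chi_sq a M : chi a M * chi a M = 1.
Proof. by rewrite -chi_mull pmulvv chi1. Qed.
End Chi.
End Pauli.
Arguments chiC {n R}.
Arguments chi_mull {n R}.
Arguments chi_mulr {n R}.
Arguments chi1 {n R}.
Arguments chir1 {n R}.
Arguments chi_sq {n R}.
Section Fourier.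
Variable R : realType.
Variable n : nat.
Implicit Types a b c e M : pauli n.
Local Notation chi := (@chi n R).
Definition NN : R := #|pauli n|%:R.
Lemma NN_gt0 : 0 < NN.
Proof. by rewrite /NN ltr0n; apply/card_gt0P; exists (pid n). Qed.
Lemma NN_neq0 : NN != 0. Proof. by rewrite gt_eqF // NN_gt0. Qed.

Lemma sum_chi M : \sum_a chi a M = if M == pid n then NN else 0.
Proof.
case: eqP => [->|/eqP hM].
  by rewrite (eq_bigr (fun _ => 1)) ?sumr_const // => a _; rewrite chir1.
have [d hd] := exists_anti hM.
set S := \sum_a _.
have : S = - S.
  rewrite {1}/S (reindex_inj (@pmulr_inj _ d)) /= -sumrN; apply: eq_bigr => a _.
  by rewrite chi_mull (chiC d) /chi /commsign hd mulrN1.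
move=> h; lra.
Qed.

Lemma sum_chi_prod M M' : \sum_a chi a M * chi a M' = if M == M' then NN else 0.
Proof.
rewrite (eq_bigr (fun a => chi a (pmul M M'))) ?sum_chi ?pmul_eq1 //.
by move=> a _; rewrite chi_mulr.
Qed.

Lemma sum_chi_prod' x e : \sum_M chi x M * chi e M = if x == e then NN else 0.
Proof.
rewrite -sum_chi_prod; apply: eq_bigr => M _; by rewrite (chiC x) (chiC e).
Qed.

Definition coef (g : pauli n -> R) a : R := NN^-1 * \sum_M g M * chi a M.

Lemma four_inv (g : pauli n -> R) M : g M = \sum_a coef g a * chi a M.
Proof.
rewrite /coef.
transitivity (NN^-1 * \sum_M' g M' * \sum_a chi a M' * chi a M).
  rewrite (bigD1 M) //= sum_chi_prod eqxx big1 ?addr0.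
    by rewrite mulrCA mulVf ?NN_neq0 ?mulr1.
  by move=> M' /negbTE h; rewrite sum_chi_prod h mulr0.
rewrite mulr_sumr; under eq_bigr do rewrite mulr_sumr mulr_sumr.
rewrite exchange_big /=; apply: eq_bigr => a _.
rewrite -mulrA mulr_suml mulr_sumr; apply: eq_bigr => M' _.
by rewrite !mulrA.
Qed.

Lemma four_supp (g : pauli n -> R) (gam : {set 'I_n}) a :
  (forall M M', (forall i, i \in gam -> M i = M' i) -> g M = g M') ->
  ~~ (supp a \subset gam) -> coef g a = 0.
Proof.
move=> hg /subsetPn [i]; rewrite inE => hai higam.
set d := site i (if a i == PX then PZ else PX).
have hd : anticomm a d by apply: anticomm_site; apply: anti1_ex.
rewrite /coef; set S := \sum_M _.
suff h : S = - S.
  have -> : S = 0 by lra.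
  by rewrite mulr0.
rewrite {1}/S (reindex_inj (@pmulr_inj _ d)) /= -sumrN; apply: eq_bigr => M _.
rewrite chi_mulr /chi /commsign hd mulrN1 mulrN; congr (- (_ * _)).
apply: hg => j hj; rewrite pmulE ffunE; case: eqP => [ej|_]; last by rewrite mul1Ir.
by move: hj; rewrite ej (negbTE higam).
Qed.

Lemma Lambda_chi (p : pdist R n) M : Lambda p M = \sum_e p e * chi e M.
Proof. by []. Qed.

Lemma Lambda_conv (p q : pdist R n) M :
  Lambda (conv p q) M = Lambda p M * Lambda q M.
Proof.
rewrite !Lambda_chi mulr_suml.
under eq_bigr do rewrite ffunE mulr_suml.
rewrite exchange_big /=; apply: eq_bigr => a _.
rewrite (reindex_inj (@pmul_inj _ a)) /= mulr_sumr; apply: eq_bigr => e _.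
by rewrite pmulK chi_mull; rewrite -!mulrA; congr (_ * _); rewrite mulrCA.
Qed.

Lemma Lambda_dirac M : Lambda (dirac_id R n) M = 1.
Proof.
rewrite Lambda_chi (bigD1 (pid n)) //= big1 ?addr0.
  by rewrite ffunE eqxx mul1r chi1.
by move=> e /negbTE h; rewrite ffunE h mul0r.
Qed.

Lemma Lambda_total (Gam : {set {set 'I_n}}) (P : {set 'I_n} -> pdist R n) M :
  Lambda (total_dist Gam P) M = \prod_(g in Gam) Lambda (P g) M.
Proof.
rewrite /total_dist; apply: (big_morph (fun p => Lambda p M)).
  by move=> p q; apply: Lambda_conv.
exact: Lambda_dirac.
Qed.

Lemma Lambda_inv (p : pdist R n) e : p e = NN^-1 * \sum_M Lambda p M * chi e M.
Proof.
transitivity (NN^-1 * \sum_x p x * \sum_M chi x M * chi e M).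
  under eq_bigr do rewrite sum_chi_prod'.
  rewrite (bigD1 e) //= big1 ?addr0.
    by rewrite eqxx mulrCA mulVf ?NN_neq0 ?mulr1.
  by move=> x /negbTE h; rewrite h mulr0.
congr (_ * _); under [RHS]eq_bigr do rewrite Lambda_chi mulr_suml.
rewrite exchange_big /=; apply: eq_bigr => x _; rewrite mulr_sumr.
by apply: eq_bigr => M _; rewrite mulrA.
Qed.

Lemma Lambda_inj (p q : pdist R n) : (forall M, Lambda p M = Lambda q M) -> p = q.
Proof.
move=> h; apply/ffunP=> e; rewrite Lambda_inv [RHS]Lambda_inv.
by congr (_ * _); apply: eq_bigr => M _; rewrite h.
Qed.

Lemma Lambda_local (gam : {set 'I_n}) (p : pdist R n) M M' :
  (forall e, ~~ (supp e \subset gam) -> p e = 0) ->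
  (forall i, i \in gam -> M i = M' i) -> Lambda p M = Lambda p M'.
Proof.
move=> hp hM; rewrite !Lambda_chi; apply: eq_bigr => e _.
case: (boolP (supp e \subset gam)) => [/subsetP hs|/hp ->]; last by rewrite !mul0r.
rewrite /chi /commsign /anticomm.
have -> // : [set i | anti1 (e i) (M i)] = [set i | anti1 (e i) (M' i)].
apply/setP=> i; rewrite !inE; case: (boolP (i \in gam)) => [/hM -> //|hi].
have : e i = PI by apply/eqP; apply: contraR hi => h; apply: hs; rewrite inE.
by move=> ->; rewrite !anti1I.
Qed.

End Fourier.
Section Synd.
Variable R : realType.
Variables n m : nat.
Variable gens : 'I_m -> pauli n.
Implicit Types a b c e M : pauli n.
Implicit Types (S : {set 'I_m}) (sg tau rho : {ffun 'I_m -> bool}).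

Definition psi sg S : R := \prod_(i in S) (if sg i then -1 else 1).
Definition NM : R := #|{set 'I_m}|%:R.
Lemma NM_gt0 : 0 < NM.
Proof. by rewrite /NM ltr0n; apply/card_gt0P; exists set0. Qed.

Lemma chi_mgen e S : chi R e (mgen gens S) = psi (syndrome gens e) S.
Proof.
rewrite /mgen (big_morph (chi R e) (fun x y => chi_mulr x y e) (chir1 e)).
by apply: eq_bigr => i _; rewrite ffunE /chi /commsign.
Qed.

Lemma syndrome1 : syndrome gens (pid n) = trivial_syndrome m.
Proof. by apply/ffunP=> i; rewrite !ffunE anticomm1. Qed.

Lemma psi_mul sg tau S : psi sg S * psi tau S = psi [ffun i => sg i (+) tau i] S.
Proof.
rewrite /psi -big_split /=; apply: eq_bigr => i _; rewrite ffunE.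
by case: (sg i); case: (tau i); rewrite /= ?mulrNN ?mulr1 ?mul1r.
Qed.

Lemma sum_psi rho : \sum_S psi rho S = if rho == trivial_syndrome m then NM else 0.
Proof.
case: eqP => [->|/eqP hr].
  rewrite (eq_bigr (fun _ => 1)) ?sumr_const // => S _.
  by rewrite /psi big1 // => i _; rewrite ffunE.
have [i hi] : exists i, rho i.
  apply/existsP; apply: contraR hr => /existsPn h; apply/eqP/ffunP=> i.
  by rewrite ffunE; apply/negbTE.
pose h S := if i \in S then S :\ i else i |: S.
have hK : involutive h.
  move=> S; rewrite /h; case: (boolP (i \in S)) => hS.
    by rewrite !inE eqxx /= setD1K.
  by rewrite !inE eqxx /= setU1K.
have hpsi S : psi rho (h S) = - psi rho S.
  rewrite /h /psi; case: (boolP (i \in S)) => hS.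
    by rewrite [in RHS](big_setD1 i hS) /= hi mulN1r opprK.
  by rewrite big_setU1 //= hi mulN1r.
set T := \sum_S _.
have : T = - T.
  rewrite {1}/T (reindex_inj (inv_inj hK)) /= -sumrN.
  by apply: eq_bigr => S _; rewrite hpsi.
move=> e; lra.
Qed.

Lemma sum_psi_prod sg tau : \sum_S psi sg S * psi tau S = if sg == tau then NM else 0.
Proof.
under eq_bigr do rewrite psi_mul.
rewrite sum_psi; congr (if _ then _ else _).
apply/eqP/eqP => [h|->]; last by apply/ffunP=> i; rewrite !ffunE addbb.
apply/ffunP=> i; move/ffunP: h => /(_ i); rewrite !ffunE.
by case: (sg i); case: (tau i).
Qed.

Lemma psi_inv (C : pauli n -> R) sg :
  \sum_S psi sg S * (\sum_a C a * psi (syndrome gens a) S) =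
  NM * \sum_(a | syndrome gens a == sg) C a.
Proof.
under eq_bigr do rewrite mulr_sumr.
rewrite exchange_big /= mulr_sumr [RHS]big_mkcond /=; apply: eq_bigr => a _.
under eq_bigr do rewrite mulrCA.
rewrite -mulr_sumr sum_psi_prod eq_sym.
by case: eqP => _; rewrite ?mulr0 // mulrC.
Qed.

End Synd.
Section LogDecomp.
Variable R : realType.
Variable n : nat.
Implicit Types a b c e M : pauli n.
Implicit Types (p q : pdist R n) (gam : {set 'I_n}).

Lemma chi_pm a M : chi R a M = 1 \/ chi R a M = -1.
Proof. by rewrite /chi /commsign; case: anticomm; [right|left]. Qed.

Lemma Lambda_pid p : Lambda p (pid n) = \sum_e p e.
Proof. by rewrite Lambda_chi; apply: eq_bigr => e _; rewrite chir1 mulr1. Qed.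

Lemma Lambda_lb gam p M : valid_local gam p -> 2 * p (pid n) - 1 <= Lambda p M.
Proof.
case=> hge hsum _ _ _.
have hs : \sum_(e | e != pid n) p e = 1 - p (pid n).
  by rewrite -hsum [in RHS](bigD1 (pid n)) //= addrC addrK.
rewrite Lambda_chi (bigD1 (pid n)) //= chi1 mulr1.
have : - \sum_(e | e != pid n) p e <= \sum_(e | e != pid n) p e * chi R e M.
  rewrite -sumrN; apply: ler_sum => e _.
  by case: (chi_pm e M) => ->; have := hge e; lra.
rewrite hs => h; lra.
Qed.

Lemma Lambda_pos gam p M : valid_local gam p -> 0 < Lambda p M.
Proof.
move=> hv; have := Lambda_lb M hv; case: hv => _ _ _ h _ h2; lra.
Qed.

Definition lc p a : R := coef (fun M => ln (Lambda p M)) a.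

Lemma lc_expand p M : ln (Lambda p M) = \sum_a lc p a * chi R a M.
Proof. exact: (four_inv (fun M => ln (Lambda p M))). Qed.

Lemma lc_supp gam p a : valid_local gam p -> ~~ (supp a \subset gam) -> lc p a = 0.
Proof.
case=> _ _ hs _ _ ha; apply: (four_supp (gam := gam)) => // M M' hM.
by rewrite (Lambda_local hs hM).
Qed.

Lemma lc_sum0 gam p : valid_local gam p -> \sum_a lc p a = 0.
Proof.
move=> hv; have := lc_expand p (pid n).
rewrite Lambda_pid; case: hv => _ -> _ _ _; rewrite ln1 => h; rewrite [RHS]h.
by apply: eq_bigr => a _; rewrite chir1 mulr1.
Qed.

Lemma lc_pid gam p : valid_local gam p ->
  lc p (pid n) = - \sum_(a | a != pid n) lc p a.
Proof.
move=> /lc_sum0; rewrite (bigD1 (pid n)) //= => h; lra.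
Qed.

Lemma lc_inj gam p q : valid_local gam p -> valid_local gam q ->
  (forall a, a != pid n -> lc p a = lc q a) -> p = q.
Proof.
move=> hp hq h.
have hall a : lc p a = lc q a.
  case: (eqVneq a (pid n)) => [->|]; last exact: h.
  rewrite (lc_pid hp) (lc_pid hq); congr (- _); apply: eq_bigr => b hb; exact: h.
apply: Lambda_inj => M; apply: (ln_inj (R := R)); rewrite ?posrE ?(Lambda_pos M hp) ?(Lambda_pos M hq) //.
by rewrite !lc_expand; apply: eq_bigr => a _; rewrite hall.
Qed.

Lemma ln_prod (I : finType) (A : {pred I}) (F : I -> R) :
  (forall i, i \in A -> 0 < F i) ->
  ln (\prod_(i in A) F i) = \sum_(i in A) ln (F i).
Proof.
move=> hF.
suff [] : 0 < \prod_(i in A) F i /\ ln (\prod_(i in A) F i) = \sum_(i in A) ln (F i) by [].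
apply: (big_rec2 (fun x y => 0 < x /\ ln x = y)); first by rewrite ln1.
move=> i x y hi [hx <-]; split; first by rewrite mulr_gt0 // hF.
by rewrite lnM // posrE // hF.
Qed.

Lemma ln_total (Gam : {set {set 'I_n}}) (P : {set 'I_n} -> pdist R n) M :
  valid_family Gam P ->
  ln (Lambda (total_dist Gam P) M) = \sum_(g in Gam) ln (Lambda (P g) M).
Proof.
move=> hv; rewrite Lambda_total ln_prod // => g hg.
exact: (Lambda_pos M (hv g hg)).
Qed.

Lemma Lambda_total_pos (Gam : {set {set 'I_n}}) (P : {set 'I_n} -> pdist R n) M :
  valid_family Gam P -> 0 < Lambda (total_dist Gam P) M.
Proof.
move=> hv; rewrite Lambda_total; apply: prodr_gt0 => g hg.
exact: (Lambda_pos M (hv g hg)).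
Qed.

End LogDecomp.

Section DataDecomp.
Variable R : realType.
Variables n m : nat.
Variable gens : 'I_m -> pauli n.
Variable Gam : {set {set 'I_n}}.
Implicit Types (P : {set 'I_n} -> pdist R n) (sg : {ffun 'I_m -> bool}).

Definition Ctot P (a : pauli n) : R := \sum_(g in Gam) lc (P g) a.

Lemma data_decomp P S : valid_family Gam P ->
  ln (syndrome_data gens Gam P S) = \sum_a Ctot P a * psi R (syndrome gens a) S.
Proof.
move=> hv; rewrite ffunE ln_total //.
under eq_bigr do rewrite lc_expand.
rewrite exchange_big /=; apply: eq_bigr => a _.
rewrite /Ctot mulr_suml; apply: eq_bigr => g _.
by rewrite chi_mgen.
Qed.

Definition Phi (d : {ffun {set 'I_m} -> R}) sg : R :=
  (NM R m)^-1 * \sum_S psi R sg S * ln (d S).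

Lemma Phi_data P sg : valid_family Gam P ->
  Phi (syndrome_data gens Gam P) sg = \sum_(a | syndrome gens a == sg) Ctot P a.
Proof.
move=> hv; rewrite /Phi.
under eq_bigr do rewrite data_decomp //.
rewrite psi_inv mulrA mulVf ?mul1r //.
by rewrite gt_eqF // NM_gt0.
Qed.

End DataDecomp.
Section IfDirs.
Variable R : realType.
Variables n m : nat.
Variable gens : 'I_m -> pauli n.
Variable Gam : {set {set 'I_n}}.
Implicit Types (P Q : {set 'I_n} -> pdist R n) (sg : {ffun 'I_m -> bool}) (a b e : pauli n).

Lemma lc_zero g (p : pdist R n) b : valid_local g p -> b != pid n -> ~~ in_Egamma g b ->
  lc p b = 0.
Proof.
move=> hv hb; rewrite /in_Egamma hb /= => hs; exact: lc_supp hv hs.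
Qed.

Lemma Ctot_zero Q b : valid_family Gam Q -> b != pid n -> ~~ in_Ebar Gam b ->
  Ctot Gam Q b = 0.
Proof.
move=> hv hb /existsPn hE; rewrite /Ctot big1 // => g hg.
apply: lc_zero (hv g hg) hb _; by move: (hE g); rewrite hg.
Qed.

Lemma Phi_single Q a : valid_family Gam Q ->
  (forall b, b != a -> syndrome gens b == syndrome gens a -> Ctot Gam Q b = 0) ->
  Phi (syndrome_data gens Gam Q) (syndrome gens a) = Ctot Gam Q a.
Proof.
move=> hv h; rewrite Phi_data // (bigD1 a) //= big1 ?addr0 // => b /andP [hs hb].
exact: h.
Qed.

Lemma total_if :
  (forall e, in_Ebar Gam e ->
      syndrome gens e != trivial_syndrome m /\
      (forall e', in_Ebar Gam e' -> e' != e -> syndrome gens e' != syndrome gens e)) ->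
  learnable gens Gam (fun P : {set 'I_n} -> pdist R n => total_dist Gam P).
Proof.
move=> H P P' hv hv' hd.
have hC a : Ctot Gam P a = Ctot Gam P' a.
  case: (eqVneq a (pid n)) => [->|ha].
    have key Q : valid_family Gam Q ->
        Phi (syndrome_data gens Gam Q) (syndrome gens (pid n)) = Ctot Gam Q (pid n).
      move=> hQ; apply: Phi_single => // b hb; rewrite syndrome1 => /eqP hs.
      apply: Ctot_zero => //; apply/negP => /H [] /eqP; by rewrite hs.
    by rewrite -(key P hv) -(key P' hv') hd.
  case: (boolP (in_Ebar Gam a)) => hE; last by rewrite !Ctot_zero.
  have key Q : valid_family Gam Q ->
      Phi (syndrome_data gens Gam Q) (syndrome gens a) = Ctot Gam Q a.
    move=> hQ; apply: Phi_single => // b hb hs.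
    case: (eqVneq b (pid n)) => [hb1|hb1].
      by have [] := H a hE; rewrite -(eqP hs) hb1 syndrome1 eqxx.
    case: (boolP (in_Ebar Gam b)) => hbE; last exact: Ctot_zero.
    by have [_ /(_ b hbE hb)] := H a hE; rewrite hs.
  by rewrite -(key P hv) -(key P' hv') hd.
apply: Lambda_inj => M; apply: (ln_inj (R := R));
  rewrite ?posrE ?Lambda_total_pos //.
rewrite !ln_total //.
have ex Q : valid_family Gam Q -> \sum_(g in Gam) ln (Lambda (Q g) M) =
    \sum_a Ctot Gam Q a * chi R a M.
  move=> hQ; under eq_bigr do rewrite lc_expand.
  rewrite exchange_big /=; apply: eq_bigr => a _.
  by rewrite /Ctot mulr_suml.
by rewrite !ex //; apply: eq_bigr => a _; rewrite hC.
Qed.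

Lemma gamma_if g : g \in Gam ->
  (forall e, in_Egamma g e ->
        syndrome gens e != trivial_syndrome m /\
        (forall g' e', g' \in Gam -> in_Egamma g' e' ->
           (g', e') != (g, e) -> syndrome gens e' != syndrome gens e)) ->
  learnable gens Gam (fun P : {set 'I_n} -> pdist R n => P g).
Proof.
move=> hg H P P' hv hv' hd.
apply: (lc_inj (hv g hg) (hv' g hg)) => a ha.
case: (boolP (supp a \subset g)) => hs; last by rewrite (lc_supp (hv g hg) hs) (lc_supp (hv' g hg) hs).
have hE : in_Egamma g a by rewrite /in_Egamma ha hs.
have key Q : valid_family Gam Q ->
    Phi (syndrome_data gens Gam Q) (syndrome gens a) = lc (Q g) a.
  move=> hQ; rewrite Phi_single //.
    rewrite /Ctot (bigD1 g) //= big1 ?addr0 // => g' /andP [hg' hne].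
    apply: lc_zero (hQ g' hg') ha _; apply/negP => hE'.
    have [_ /(_ g' a hg' hE')] := H a hE.
    by rewrite xpair_eqE (negbTE hne) eqxx => /(_ isT) /eqP.
  move=> b hb hsb; rewrite /Ctot big1 // => g' hg'.
  case: (eqVneq b (pid n)) => [hb1|hb1].
    by have [] := H a hE; rewrite -(eqP hsb) hb1 syndrome1 eqxx.
  apply: lc_zero (hQ g' hg') hb1 _; apply/negP => hE'.
  have [_ /(_ g' b hg' hE')] := H a hE.
  by rewrite xpair_eqE (negbTE hb) andbF hsb => /(_ isT).
by rewrite -(key P hv) -(key P' hv') hd.
Qed.

End IfDirs.
Section Base.
Variable R : realType.
Variable n : nat.
Implicit Types (a b e x f M : pauli n) (p : pdist R n) (g : {set 'I_n}).

Definition tt0 : R := (4 * NN R n)^-1.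
Definition ss0 : R := tt0 / 2.
Lemma tt0_gt0 : 0 < tt0.
Proof. by rewrite /tt0 invr_gt0 mulr_gt0 // NN_gt0. Qed.
Lemma NN_ge1 : 1 <= NN R n.
Proof. by rewrite /NN ler1n; apply/card_gt0P; exists (pid n). Qed.
Lemma tt0NN : tt0 * NN R n = 1/4.
Proof. by rewrite /tt0 invfM -mulrA mulVf ?NN_neq0 // mulr1 mul1r. Qed.
Lemma tt0_le : tt0 <= 1/4.
Proof. have := tt0NN; have := NN_ge1; have := tt0_gt0; nra. Qed.

Definition kk g : R := #|[pred x : pauli n | supp x \subset g]|%:R.
Lemma kk_le g : kk g <= NN R n.
Proof. by rewrite /kk /NN ler_nat max_card. Qed.

Definition base g : pdist R n :=
  [ffun x => (if supp x \subset g then tt0 else 0) + (if x == pid n then 1 - kk g * tt0 else 0)].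

Lemma kt_le g : kk g * tt0 <= 1/4.
Proof.
rewrite -tt0NN mulrC ler_pM2l ?tt0_gt0 //; exact: kk_le.
Qed.

Lemma kt_ge g : tt0 <= kk g * tt0.
Proof.
have k1 : 1 <= kk g.
  rewrite /kk ler1n; apply/card_gt0P; exists (pid n); by rewrite inE supp_pid sub0set.
have := tt0_gt0; nra.
Qed.

Lemma sum_delta (F : pauli n -> R) (y : pauli n) (c : R) : \sum_(x : pauli n) (if x == y then c else 0) * F x = c * F y.
Proof.
rewrite (bigD1 y) //= eqxx big1 ?addr0 // => x /negbTE ->; by rewrite mul0r.
Qed.
Lemma sum_delta1 (y : pauli n) (c : R) : \sum_(x : pauli n) (if x == y then c else 0) = c.
Proof.
by rewrite -[RHS]mulr1 -(sum_delta (fun _ => 1) y c); apply: eq_bigr => x _; rewrite mulr1.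
Qed.

Lemma base_sum g : \sum_(x : pauli n) base g x = 1.
Proof.
under eq_bigr do rewrite ffunE.
rewrite big_split /= sum_delta1 -big_mkcond /= sumr_const.
rewrite /kk -mulr_natl. have -> : #|[pred x : pauli n | supp x \subset g]| = #|(fun x : pauli n => supp x \subset g)| by [].
by rewrite -mulr_natr mulr1; lra.
Qed.

Lemma base_pid g : 3/4 <= base g (pid n).
Proof.
rewrite ffunE eqxx supp_pid sub0set; have := kt_le g; have := tt0_gt0; lra.
Qed.
Lemma base_ge0 g x : 0 <= base g x.
Proof.
rewrite ffunE; have := kt_le g; have := tt0_gt0.
by case: (_ \subset _); case: (_ == _); lra.
Qed.
Lemma base_in g x : supp x \subset g -> tt0 <= base g x.
Proof.
move=> h; rewrite ffunE h; have := kt_le g; have := tt0_gt0.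
by case: (_ == _); lra.
Qed.
Lemma base_out g x : ~~ (supp x \subset g) -> base g x = 0.
Proof.
move=> h; rewrite ffunE (negbTE h); case: eqP => [ex|_]; last by rewrite addr0.
by move: h; rewrite ex supp_pid sub0set.
Qed.
Lemma base_le1 g x : base g x <= 1.
Proof.
rewrite ffunE; have := kt_le g; have := tt0_gt0; have := tt0_le; have := kt_ge g.
by case: (_ \subset _); case: (_ == _); lra.
Qed.
Lemma base_npid g x : x != pid n -> base g x <= tt0.
Proof.
move=> h; rewrite ffunE (negbTE h) addr0; have := tt0_gt0.
by case: (_ \subset _); lra.
Qed.

Lemma base_valid g : valid_local g (base g).
Proof.
split.
- exact: base_ge0.
- exact: base_sum.
- exact: base_out.
- have := base_pid g; lra.
- move=> e _ hs; have := base_in hs; have := tt0_gt0; lra.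
Qed.

Lemma supp_mulK g x f : supp f \subset g -> (supp (pmul x f) \subset g) = (supp x \subset g).
Proof.
move=> hf; apply/idP/idP => h; last exact: supp_mul.
by rewrite -(pmulKr f x); apply: supp_mul.
Qed.

Definition shiftd p fr to s : pdist R n :=
  [ffun x => p x + (if x == to then s else 0) - (if x == fr then s else 0)].

Lemma Lambda_shift p fr to s M :
  Lambda (shiftd p fr to s) M = Lambda p M + s * chi R to M - s * chi R fr M.
Proof.
rewrite !Lambda_chi; under eq_bigr do rewrite ffunE mulrBl mulrDl.
by rewrite big_split /= big_split /= sumrN !sum_delta.
Qed.

Lemma shift_valid g fr to : to != fr -> in_Egamma g to -> supp fr \subset g ->
  valid_local g (shiftd (base g) fr to ss0).
Proof.
move=> hne /andP [hto hsto] hsfr.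
have t0 := tt0_gt0; have t1 := tt0_le; rewrite /ss0.
have hne' : (fr == to) = false by rewrite eq_sym (negbTE hne).
have hval x : shiftd (base g) fr to (tt0/2) x =
   base g x + (if x == to then tt0/2 else 0) - (if x == fr then tt0/2 else 0) by rewrite ffunE.
split.
- move=> x; rewrite hval; have := base_ge0 g x.
  case: (eqVneq x fr) => [->|_]; last by case: (_ == _); lra.
  by rewrite hne' ?eqxx; have := base_in hsfr; lra.
- rewrite (eq_bigr _ (fun x _ => hval x)) big_split /= big_split /= sumrN !sum_delta1 base_sum; lra.
- move=> x hx; rewrite hval base_out //.
  have -> : (x == to) = false by apply/negbTE; apply: contraNneq hx => ->.
  have -> : (x == fr) = false by apply/negbTE; apply: contraNneq hx => ->.
  by rewrite addr0 subr0.
- rewrite hval; have -> : (pid n == to) = false by rewrite eq_sym (negbTE hto).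
  have := base_pid g; by case: (_ == _); lra.
- move=> x hx hs; rewrite hval; have := base_in hs.
  case: (eqVneq x fr) => [->|_]; last by case: (_ == _); lra.
  by rewrite hne' ?eqxx; lra.
Qed.

Definition twist p f (a b : R) : pdist R n := [ffun x => a * p x + b * p (pmul x f)].

Lemma Lambda_twist p f (a b : R) M :
  Lambda (twist p f a b) M = (a + b * chi R f M) * Lambda p M.
Proof.
rewrite !Lambda_chi; under eq_bigr do rewrite ffunE mulrDl.
rewrite big_split /= mulrDl !mulr_sumr; congr (_ + _).
  by apply: eq_bigr => x _; rewrite mulrA.
rewrite (reindex_inj (@pmulr_inj _ f)) /=; apply: eq_bigr => x _.
by rewrite pmulKr chi_mull; ring.
Qed.

Lemma sum_twist p f (a b : R) : \sum_(x : pauli n) twist p f a b x = (a + b) * \sum_(x : pauli n) p x.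
Proof.
under eq_bigr do rewrite ffunE.
rewrite big_split /= -!mulr_sumr mulrDl; congr (_ + b * _).
by rewrite (reindex_inj (@pmulr_inj _ f)) /=; apply: eq_bigr => x _; rewrite pmulKr.
Qed.

Definition tw1 g e : pdist R n := twist (base g) e (1 - ss0) ss0.
Definition uu : R := (1 - 2 * ss0)^-1.
Definition tw2 g e : pdist R n := twist (base g) e (uu * (1 - ss0)) (- (uu * ss0)).

Lemma ss0_bounds : 0 < ss0 /\ ss0 <= 1/8.
Proof. have := tt0_gt0; have := tt0_le; rewrite /ss0; lra. Qed.
Lemma uu_prop : 0 < uu /\ uu * (1 - 2 * ss0) = 1.
Proof.
have [h1 h2] := ss0_bounds; have hp : 0 < 1 - 2 * ss0 by lra.
by rewrite /uu invr_gt0 hp mulVf // gt_eqF.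
Qed.

Lemma base_twist_out g e x : supp e \subset g -> ~~ (supp x \subset g) ->
  base g x = 0 /\ base g (pmul x e) = 0.
Proof.
move=> he hx; rewrite !base_out //; by rewrite supp_mulK.
Qed.

Lemma tw1_valid g e : in_Egamma g e -> valid_local g (tw1 g e).
Proof.
move=> /andP [he hse]; have [s0 s1] := ss0_bounds.
have hv x : tw1 g e x = (1 - ss0) * base g x + ss0 * base g (pmul x e) by rewrite ffunE.
split.
- move=> x; rewrite hv; have := base_ge0 g x; have := base_ge0 g (pmul x e); nra.
- by rewrite sum_twist base_sum; lra.
- by move=> x hx; rewrite hv; have [-> ->] := base_twist_out hse hx; lra.
- rewrite hv; have := base_pid g; have := base_ge0 g (pmul (pid n) e); nra.
- move=> x _ hx; rewrite hv; have := base_in hx; have := tt0_gt0.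
  have := base_ge0 g (pmul x e); nra.
Qed.

Lemma tw2_valid g e : in_Egamma g e -> valid_local g (tw2 g e).
Proof.
move=> /andP [he hse]; have [s0 s1] := ss0_bounds; have [u0 u1] := uu_prop.
have t0 := tt0_gt0; have t1 := tt0_le.
have hv x : tw2 g e x = uu * ((1 - ss0) * base g x - ss0 * base g (pmul x e)).
  by rewrite ffunE; lra.
split.
- move=> x; rewrite hv; apply: mulr_ge0; first lra.
  case: (boolP (supp x \subset g)) => hx.
    have := base_in hx; have := base_le1 g (pmul x e); rewrite /ss0 in s0 s1 *; nra.
  by have [-> ->] := base_twist_out hse hx; lra.
- rewrite sum_twist base_sum mulr1; lra.
- by move=> x hx; rewrite hv; have [-> ->] := base_twist_out hse hx; lra.
- rewrite hv; have h1 := base_pid g; have h2 := base_le1 g (pmul (pid n) e).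
  have hX : (1 - 2 * ss0) / 2 < (1 - ss0) * base g (pid n) - ss0 * base g (pmul (pid n) e) by nra.
  have : uu * ((1 - 2 * ss0) / 2) < uu * ((1 - ss0) * base g (pid n) - ss0 * base g (pmul (pid n) e)).
    by rewrite ltr_pM2l.
  by rewrite mulrA u1; lra.
- move=> x _ hx; rewrite hv; apply: mulr_gt0 => //.
  have := base_in hx; have := base_le1 g (pmul x e); rewrite /ss0 in s0 s1 *; nra.
Qed.

End Base.
Section Constr.
Variable R : realType.
Variables n m : nat.
Variable gens : 'I_m -> pauli n.
Variable Gam : {set {set 'I_n}}.
Implicit Types (P Q : {set 'I_n} -> pdist R n) (a b e f M : pauli n).

Definition upd P g (p : pdist R n) := fun g' => if g' == g then p else P g'.
Definition baseF : {set 'I_n} -> pdist R n := fun g => base R g.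

Lemma baseF_valid : valid_family Gam baseF.
Proof. by move=> g _; apply: base_valid. Qed.

Lemma chi_ne a b M : anticomm (pmul a b) M -> chi R a M - chi R b M != 0.
Proof.
move=> h; have : chi R a M * chi R b M = -1 by rewrite -chi_mull /chi /commsign h.
by case: (@chi_pm R _ a M) => ->; case: (@chi_pm R _ b M) => ->; rewrite ?mulr1 ?mulrN1 ?opprK;
  move=> hh; apply/eqP; lra.
Qed.

Lemma constr_S g fr to : g \in Gam -> to != fr -> in_Egamma g to -> supp fr \subset g ->
  syndrome gens fr = syndrome gens to ->
  exists P P', [/\ valid_family Gam P, valid_family Gam P',
    syndrome_data gens Gam P = syndrome_data gens Gam P', P g <> P' g &
    total_dist Gam P <> total_dist Gam P'].
Proof.
move=> hg hne hto hfr hsyn.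
set p' := shiftd (base R g) fr to (ss0 R n).
exists baseF, (upd baseF g p'); split.
- exact: baseF_valid.
- move=> g' hg'; rewrite /upd; case: eqP => [->|_]; last exact: base_valid.
  exact: shift_valid.
- apply/ffunP=> S; rewrite !ffunE !Lambda_total; apply: eq_bigr => g' _.
  rewrite /upd; case: eqP => [->|//]; rewrite Lambda_shift !chi_mgen hsyn /baseF.
  by rewrite addrK.
- have hv : shiftd (base R g) fr to (ss0 R n) to = base R g to + ss0 R n.
    by rewrite [LHS]ffunE eqxx (negbTE hne) subr0.
  rewrite /upd /= eqxx => /ffunP /(_ to); rewrite /p' hv /baseF.
  have := (ss0_bounds R n); lra.
- have hne' : pmul to fr != pid n by rewrite pmul_eq1.
  have [M hM] := exists_anti hne'.
  have hL : Lambda (total_dist Gam (upd baseF g p')) M =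
      Lambda p' M * \prod_(i in Gam | i != g) Lambda (baseF i) M.
    rewrite Lambda_total (bigD1 g) //=; congr (_ * _); first by rewrite /upd eqxx.
    by apply: eq_bigr => i /andP [_ /negbTE h]; rewrite /upd h.
  have hL0 : Lambda (total_dist Gam baseF) M =
      Lambda (baseF g) M * \prod_(i in Gam | i != g) Lambda (baseF i) M.
    by rewrite Lambda_total (bigD1 g).
  have hpos : 0 < \prod_(i in Gam | i != g) Lambda (baseF i) M.
    by apply: prodr_gt0 => i _; apply: (Lambda_pos M (base_valid R i)).
  move=> /(congr1 (fun p => Lambda p M)) /=; rewrite hL hL0.
  rewrite /p' Lambda_shift /baseF => h.
  set Q := \prod_(i in Gam | i != g) _ in h hpos.
  have h2 : (chi R to M - chi R fr M) * (ss0 R n * Q) = 0.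
    have e1 : (chi R to M - chi R fr M) * (ss0 R n * Q) = (Lambda (base R g) M + ss0 R n * chi R to M - ss0 R n * chi R fr M) * Q - Lambda (base R g) M * Q by ring.
    rewrite e1; lra.
  have hsQ : 0 < ss0 R n * Q by rewrite mulr_gt0 //; case: (ss0_bounds R n).
  by move/eqP: h2; rewrite mulf_eq0 (negbTE (chi_ne hM)) /= (gt_eqF hsQ).
Qed.

Definition w0 e M : R := (1 - ss0 R n) + ss0 R n * chi R e M.
Definition w1 e M : R := uu R n * (1 - ss0 R n) + - (uu R n * ss0 R n) * chi R e M.

Lemma w01_same e e' M : chi R e M = chi R e' M -> w0 e M * w1 e' M = 1.
Proof.
move=> h; rewrite /w0 /w1 -h.
have hc : chi R e M * chi R e M = 1 by rewrite chi_sq.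
have [u0 u1] := uu_prop R n.
transitivity (uu R n * ((1 - ss0 R n) ^+ 2 - (ss0 R n) ^+ 2 * (chi R e M * chi R e M))); first by ring.
rewrite hc -[RHS]u1; ring.
Qed.

Lemma w01_diff e e' M : anticomm (pmul e e') M -> w0 e M * w1 e' M != 1.
Proof.
move=> h; have : chi R e M * chi R e' M = -1 by rewrite -chi_mull /chi /commsign h.
have [u0 u1] := uu_prop R n; have [s0 s1] := ss0_bounds R n.
rewrite /w0 /w1.
case: (@chi_pm R _ e M) => ->; case: (@chi_pm R _ e' M) => -> hh; apply/eqP => hx; try lra.
- have : uu R n = 1 by lra.
  by move=> hu; rewrite hu in u1; lra.
- have : uu R n * (1 - ss0 R n) + uu R n * ss0 R n = uu R n * (1 - 2 * ss0 R n) + 2 * (uu R n * ss0 R n) by ring.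
  rewrite u1 => hh2; nra.
Qed.

Lemma constr_T g0 g1 e e' : g0 \in Gam -> g1 \in Gam -> g0 != g1 ->
  in_Egamma g0 e -> in_Egamma g1 e' ->
  syndrome gens e = syndrome gens e' ->
  exists P P', [/\ valid_family Gam P, valid_family Gam P',
    syndrome_data gens Gam P = syndrome_data gens Gam P', P g0 <> P' g0 &
    (e != e' -> total_dist Gam P <> total_dist Gam P')].
Proof.
move=> hg0 hg1 hne he he' hsyn.
set P' := upd (upd baseF g1 (tw2 R g1 e')) g0 (tw1 R g0 e).
have hw g' M : g' \in Gam -> Lambda (P' g') M =
   (if g' == g0 then w0 e M else if g' == g1 then w1 e' M else 1) * Lambda (baseF g') M.
  move=> _; rewrite /P' /upd; case: eqP => [->|_].
    by rewrite /tw1 Lambda_twist.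
  case: eqP => [->|_]; last by rewrite mul1r.
  by rewrite /tw2 Lambda_twist.
have hprod M : Lambda (total_dist Gam P') M = w0 e M * w1 e' M * Lambda (total_dist Gam baseF) M.
  rewrite !Lambda_total (eq_bigr _ (fun g' hg' => hw g' M hg')) big_split /=.
  congr (_ * _).
  have hne10 : (g1 == g0) = false by rewrite eq_sym (negbTE hne).
  rewrite (bigD1 g0) //= eqxx (bigD1 g1) /=; last by rewrite hg1 hne10.
  rewrite hne10 eqxx big1 ?mulr1 // => g' /andP [/andP [_ h0] h1].
  by rewrite (negbTE h0) (negbTE h1).
exists baseF, P'; split.
- exact: baseF_valid.
- move=> g' hg'; rewrite /P' /upd; case: eqP => [->|_]; first exact: tw1_valid.
  case: eqP => [->|_]; [exact: tw2_valid | exact: base_valid].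
- apply/ffunP=> S; rewrite !ffunE hprod w01_same ?mul1r //.
  by rewrite !chi_mgen hsyn.
- have hv : tw1 R g0 e e = (1 - ss0 R n) * base R g0 e + ss0 R n * base R g0 (pid n).
    by rewrite /tw1 /twist [LHS]ffunE pmulvv.
  rewrite /P' /upd /= eqxx => /ffunP /(_ e); rewrite /baseF hv.
  have := base_npid R g0 (proj1 (andP he)); have := base_pid R g0.
  have := (ss0_bounds R n); have := tt0_le R n; nra.
- move=> hee; have hne' : pmul e e' != pid n by rewrite pmul_eq1.
  have [M hM] := exists_anti hne'.
  move=> /(congr1 (fun p => Lambda p M)); rewrite hprod => h.
  have hpos := Lambda_total_pos M baseF_valid.
  have hw1 := w01_diff hM.
  have : (1 - w0 e M * w1 e' M) * Lambda (total_dist Gam baseF) M = 0.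
    rewrite mulrBl mul1r; rewrite -h; lra.
  move/eqP; rewrite mulf_eq0 (gt_eqF hpos) orbF subr_eq0 eq_sym.
  by rewrite (negbTE hw1).
Qed.

End Constr.
Section Analysis.
Variable R : realType.
Variable n : nat.
Implicit Types (a b e x M : pauli n) (p : pdist R n) (g : {set 'I_n}).

Lemma ln_le_sub1 (y : R) : 0 < y -> ln y <= y - 1.
Proof.
move=> hy; have := expR_ge1Dx (ln y); rewrite lnK ?posrE //; lra.
Qed.

Lemma ln_bound (x : R) : 0 <= x -> x <= 1/2 -> `|ln (1 - x) + x| <= 2 * x ^+ 2.
Proof.
move=> h0 h1; have hy : 0 < 1 - x by lra.
have up := ln_le_sub1 hy.
have hv : 0 < (1 - x)^-1 by rewrite invr_gt0.
have lo := ln_le_sub1 hv; rewrite lnV ?posrE // in lo.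
have hvv : (1 - x)^-1 * (1 - x) = 1 by rewrite mulVf // gt_eqF.
rewrite ler_norml; apply/andP; split; last by have := sqr_ge0 x; lra.
(* lower: ln(1-x) >= 1 - v, v = 1/(1-x) ; need 1 - v + x >= -2x^2 *)
set v := (1 - x)^-1 in hv lo hvv *.
have : v <= 1 + x + 2 * x ^+ 2.
  have hx : (1 + x + 2 * x ^+ 2) * (1 - x) - 1 = x ^+ 2 * (1 - 2 * x) by ring.
  have : 0 <= x ^+ 2 * (1 - 2 * x) by apply: mulr_ge0; [exact: sqr_ge0 | lra].
  rewrite -hx => hh.
  have : v * ((1 + x + 2 * x ^+ 2) * (1 - x) - 1) >= 0 by apply: mulr_ge0; lra.
  have -> : v * ((1 + x + 2 * x ^+ 2) * (1 - x) - 1) = (1 + x + 2 * x ^+ 2) * (v * (1 - x)) - v by ring.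
  by rewrite hvv; lra.
lra.
Qed.

Lemma cs_sum (P : pred (pauli n)) (F : pauli n -> R) :
  (\sum_(i | P i) F i) ^+ 2 <= #|P|%:R * \sum_(i | P i) F i ^+ 2.
Proof.
set k : R := #|P|%:R; set S2 := \sum_(i | P i) F i ^+ 2.
have A : \sum_(i | P i) \sum_(j | P j) F i ^+ 2 = k * S2.
  rewrite /S2 mulr_sumr; apply: eq_bigr => i _; by rewrite sumr_const -mulr_natl.
have B : \sum_(i | P i) \sum_(j | P j) F j ^+ 2 = k * S2.
  by rewrite sumr_const -mulr_natl.
have C : \sum_(i | P i) \sum_(j | P j) ((F i ^+ 2 + F j ^+ 2) / 2) = (k * S2 + k * S2) / 2.
  transitivity ((\sum_(i | P i) \sum_(j | P j) F i ^+ 2 + \sum_(i | P i) \sum_(j | P j) F j ^+ 2) / 2); last by rewrite A B.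
  rewrite -big_split /= mulr_suml; apply: eq_bigr => i _.
  by rewrite -big_split /= mulr_suml.
rewrite expr2 mulr_suml.
under eq_bigr do rewrite mulr_sumr.
apply: le_trans (_ : \sum_(i | P i) \sum_(j | P j) ((F i ^+ 2 + F j ^+ 2) / 2) <= _).
  apply: ler_sum => i _; apply: ler_sum => j _.
  have := sqr_ge0 (F i - F j); rewrite !expr2 => h; nra.
rewrite C; lra.
Qed.

Lemma sum_const_NN (c : R) : \sum_(M : pauli n) c = c * NN R n.
Proof. by rewrite sumr_const -mulr_natr. Qed.

Definition rr p : R := \sum_(e | e != pid n) p e.

Lemma rr_ge0 g p : valid_local g p -> 0 <= rr p.
Proof. by case=> h _ _ _ _; apply: sumr_ge0 => e _; apply: h. Qed.

Lemma rr_cs g p : valid_local g p ->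
  rr p ^+ 2 <= NN R n * \sum_(e | in_Egamma g e) p e ^+ 2.
Proof.
case=> h0 _ hs _ _.
have -> : rr p = \sum_(e | in_Egamma g e) p e.
  rewrite /rr [RHS]big_mkcond [LHS]big_mkcond; apply: eq_bigr => e _.
  rewrite /in_Egamma; case: (e != pid n) => //=.
  by case: (boolP (supp e \subset g)) => // /hs ->.
apply: le_trans (cs_sum _ _) _; apply: ler_wpM2r.
  by apply: sumr_ge0 => e _; exact: sqr_ge0.
by rewrite /NN ler_nat max_card.
Qed.

Lemma one_sub_Lambda g p M : valid_local g p ->
  0 <= 1 - Lambda p M <= 2 * rr p.
Proof.
move=> hv; have [h0 hsum _ _ _] := hv.
have e1 : 1 - Lambda p M = \sum_e p e * (1 - chi R e M).
  rewrite -[X in X - _ = _]hsum Lambda_chi -sumrB; apply: eq_bigr => e _; ring.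
rewrite e1; apply/andP; split.
  apply: sumr_ge0 => e _; apply: mulr_ge0 => //; case: (@chi_pm R _ e M) => ->; lra.
rewrite (bigD1 (pid n)) //= chi1 subrr mulr0 add0r /rr mulr_sumr.
apply: ler_sum => e _; have := h0 e; case: (@chi_pm R _ e M) => ->; lra.
Qed.

Lemma lc_close g p a : valid_local g p -> a != pid n -> rr p <= 1/4 ->
  `|lc p a - p a| <= 8 * rr p ^+ 2.
Proof.
move=> hv ha hr.
have hchi : \sum_M chi R a M = 0.
  rewrite (eq_bigr (fun M => chi R M a)) ?sum_chi ?(negbTE ha) // => M _; exact: chiC.
have e1 : lc p a - p a = (NN R n)^-1 * \sum_M (ln (Lambda p M) + (1 - Lambda p M)) * chi R a M.
  rewrite /lc /coef (Lambda_inv p a) -mulrBr; congr (_ * _).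
  rewrite -sumrB; under [RHS]eq_bigr do rewrite mulrDl mulrBl mul1r.
  rewrite [RHS]big_split /= sumrB [in RHS]sumrB (_ : \sum_i chi R a i = 0); [ring | exact: hchi].
have hN : 0 <= (NN R n)^-1 by rewrite invr_ge0 ltW // NN_gt0.
rewrite e1 normrM (ger0_norm hN).
apply: (@le_trans _ _ ((NN R n)^-1 * \sum_(M : pauli n) 8 * rr p ^+ 2)).
  apply: ler_wpM2l; first by rewrite invr_ge0 ltW // NN_gt0.
  apply: le_trans (ler_norm_sum _ _ _) _; apply: ler_sum => M _.
  rewrite normrM.
  have -> : `|chi R a M| = 1 by case: (@chi_pm R _ a M) => ->; rewrite ?normrN normr1.
  rewrite mulr1.
  have /andP [x0 x1] := one_sub_Lambda M hv.
  have hr0 := rr_ge0 hv.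
  have x1' : 1 - Lambda p M <= 1/2 by lra.
  have hb := ln_bound x0 x1'.
  have hl : 1 - (1 - Lambda p M) = Lambda p M by ring.
  rewrite hl in hb; apply: le_trans hb _.
  have : (1 - Lambda p M) ^+ 2 <= (2 * rr p) ^+ 2 by rewrite ler_sqr ?nnegrE //; lra.
  rewrite !expr2; nra.
rewrite sum_const_NN mulrCA.
by rewrite mulVf ?NN_neq0 // mulr1.
Qed.

End Analysis.
Section Part3.
Variable R : realType.
Variables n m : nat.
Variable gens : 'I_m -> pauli n.
Variable Gam : {set {set 'I_n}}.

Definition Qg (P : {set 'I_n} -> pdist R n) g : R :=
  \sum_(e | in_Egamma g e) (P g e) ^+ 2.

Lemma Qg_ge0 P g : 0 <= Qg P g.
Proof. by apply: sumr_ge0 => e _; exact: sqr_ge0. Qed.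

Lemma part3 (s : {ffun 'I_m -> bool}) : s != trivial_syndrome m ->
    exists (f : {ffun {set 'I_m} -> R} -> R) (K delta : R),
      0 < K /\ 0 < delta /\
      forall P : {set 'I_n} -> pdist R n, valid_family Gam P ->
        normsqC gens Gam P s <= delta ->
        `| f (syndrome_data gens Gam P) - classRate gens Gam P s |
          <= K * normsqC gens Gam P s.
Proof.
move=> hs.
have N1 := NN_ge1 R n.
exists (fun d => Phi d s), (8 * NN R n ^+ 2), (16 * NN R n)^-1.
split; first by rewrite mulr_gt0 // exprn_gt0 // NN_gt0.
split; first by rewrite invr_gt0 mulr_gt0 // NN_gt0.
move=> P hv hd.
set GC := GammaC gens Gam s.
have hQ g : g \in GC -> Qg P g <= normsqC gens Gam P s.
  move=> hg; rewrite /normsqC -/GC (bigD1 g) //= -/(Qg P g) lerDl.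
  by apply: sumr_ge0 => g' _; exact: Qg_ge0.
have hdelta : NN R n * (16 * NN R n)^-1 = 1/16.
  by rewrite invfM mulrCA mulfV ?NN_neq0 // mulr1 mul1r.
rewrite Phi_data //.
have eX : \sum_(a | syndrome gens a == s) Ctot Gam P a =
    \sum_(g in Gam) \sum_(a | in_Egamma g a && (syndrome gens a == s)) lc (P g) a.
  rewrite /Ctot exchange_big /=; apply: eq_bigr => g hg.
  rewrite big_mkcond [RHS]big_mkcond; apply: eq_bigr => a _.
  case: eqP => hsa; rewrite ?andbF ?andbT //.
  case: (boolP (in_Egamma g a)) => // hE.
  apply: lc_zero (hv g hg) _ hE.
  by apply: contra_neq hs => ha; rewrite -hsa ha syndrome1.
rewrite eX /classRate -sumrB.
apply: le_trans (ler_norm_sum _ _ _) _.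
apply: (@le_trans _ _ (\sum_(g in Gam) (if g \in GC then 8 * NN R n ^+ 2 * Qg P g else 0))).
  apply: ler_sum => g hg; rewrite -sumrB.
  case: (boolP (g \in GC)) => hgC; last first.
    rewrite big_pred0 ?normr0 // => a; apply/negP => /andP [hE hsa].
    by move: hgC; rewrite inE hg /=; case/existsP; exists a; rewrite hE hsa.
  have hvg := hv g hg.
  have hr0 := rr_ge0 hvg.
  have hcs := rr_cs hvg.
  have hQd := le_trans (hQ g hgC) hd.
  have hQ0 := Qg_ge0 P g.
  have hNQ : NN R n * Qg P g <= 1/16.
    by rewrite -hdelta ler_wpM2l // ltW // NN_gt0.
  have hr : rr (P g) <= 1/4.
    rewrite /Qg in hNQ; nra.
  apply: le_trans (ler_norm_sum _ _ _) _.
  apply: (@le_trans _ _ (\sum_(a | in_Egamma g a && (syndrome gens a == s)) 8 * rr (P g) ^+ 2)).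
    apply: ler_sum => a /andP [/andP [ha _] _]; exact: lc_close hvg ha hr.
  apply: (@le_trans _ _ (\sum_(a : pauli n) 8 * rr (P g) ^+ 2)).
    rewrite [X in X <= _]big_mkcond /=; apply: ler_sum => a _.
    case: (_ && _) => //; apply: mulr_ge0 => //; exact: sqr_ge0.
  rewrite sum_const_NN.
  have : rr (P g) ^+ 2 <= NN R n * Qg P g by exact: hcs.
  move=> h; rewrite expr2 in h *; rewrite -/(Qg P g); nra.
rewrite -big_mkcondr /= /normsqC -/GC mulr_sumr.
rewrite le_eqVlt; apply/orP; left; apply/eqP; apply: eq_bigl => g.
by rewrite /GC inE andb_idl // => /andP [].
Qed.

End Part3.

Unset Implicit Arguments.
Set Strict Implicit.
Theorem theorem2 (R : realType) (n m : nat) (Gamma : {set {set 'I_n}})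
    (gens : 'I_m -> pauli n)
    (gens_comm : forall i j, ~~ anticomm (gens i) (gens j)) :
  (* 1. learnability of the total channel *)
  (learnable gens Gamma (fun P : {set 'I_n} -> pdist R n => total_dist Gamma P) <->
   (forall e, in_Ebar Gamma e ->
      syndrome gens e != trivial_syndrome m /\
      (forall e', in_Ebar Gamma e' -> e' != e -> syndrome gens e' != syndrome gens e)))
  /\
  (* 2. learnability of an individual channel N_gamma *)
  (forall gamma, gamma \in Gamma ->
    (learnable gens Gamma (fun P : {set 'I_n} -> pdist R n => P gamma) <->
     (forall e, in_Egamma gamma e ->
        syndrome gens e != trivial_syndrome m /\
        (forall gamma' e', gamma' \in Gamma -> in_Egamma gamma' e' ->
           (gamma', e') != (gamma, e) -> syndrome gens e' != syndrome gens e))))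
  /\
  (* 3. syndrome class rates are learnable up to O(||p^(Gamma_C)||^2) *)
  (forall s : {ffun 'I_m -> bool}, s != trivial_syndrome m ->
    (exists gamma e, gamma \in Gamma /\ in_Egamma gamma e /\ syndrome gens e = s) ->
    exists (f : {ffun {set 'I_m} -> R} -> R) (K delta : R),
      0 < K /\ 0 < delta /\
      forall P : {set 'I_n} -> pdist R n, valid_family Gamma P ->
        normsqC gens Gamma P s <= delta ->
        `| f (syndrome_data gens Gamma P) - classRate gens Gamma P s |
          <= K * normsqC gens Gamma P s).
Proof.
split; last split.
- split; last exact: total_if.
  move=> hL e /existsP [g /andP [hg he]]; split.
    apply/negP => /eqP htriv.
    have hs0 : supp (pid n) \subset g by rewrite supp_pid sub0set.
    have hsy : syndrome gens (pid n) = syndrome gens e by rewrite syndrome1 htriv.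
    have [P [P' [hv hv' hd _ hne]]] := @constr_S R n m gens Gamma g (pid n) e hg (proj1 (andP he)) he hs0 hsy.
    by apply: hne; apply: hL.
  move=> e' /existsP [g' /andP [hg' he']] hee; apply/negP => /eqP hs.
  case: (eqVneq g' g) => [eg|ng].
    subst g'.
    have [P [P' [hv hv' hd _ hne]]] := @constr_S R n m gens Gamma g e e' hg hee he'
      (proj2 (andP he)) (esym hs).
    by apply: hne; apply: hL.
  have [P [P' [hv hv' hd _ hne]]] := @constr_T R n m gens Gamma g g' e e' hg hg'
      (negbT (introF eqP (fun h => (negP ng) (introT eqP (esym h))))) he he' (esym hs).
  by apply: (hne (negbT (introF eqP (fun h => (negP hee) (introT eqP (esym h)))))); apply: hL.
- move=> g hg; split; last exact: gamma_if.
  move=> hL e he; split.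
    apply/negP => /eqP htriv.
    have hs0 : supp (pid n) \subset g by rewrite supp_pid sub0set.
    have hsy : syndrome gens (pid n) = syndrome gens e by rewrite syndrome1 htriv.
    have [P [P' [hv hv' hd hne _]]] := @constr_S R n m gens Gamma g (pid n) e hg (proj1 (andP he)) he hs0 hsy.
    by apply: hne; apply: hL.
  move=> g' e' hg' he' hpair; apply/negP => /eqP hs.
  case: (eqVneq g' g) => [eg|ng].
    subst g'.
    have hee : e' != e by move: hpair; rewrite xpair_eqE eqxx.
    have [P [P' [hv hv' hd hne _]]] := @constr_S R n m gens Gamma g e e' hg hee he'
      (proj2 (andP he)) (esym hs).
    by apply: hne; apply: hL.
  have [P [P' [hv hv' hd hne _]]] := @constr_T R n m gens Gamma g g' e e' hg hg'
      (negbT (introF eqP (fun h => (negP ng) (introT eqP (esym h))))) he he' (esym hs).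
  by apply: hne; apply: hL.
- move=> s hs _; exact: part3.
Qed.
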